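(* Let $P\subseteq\mathbb{P}^{n-1}$ be a full-dimensional polytope. Then its slicing set is \[P^{[n-1]}=\{V\in\mathrm{Gr}(n-1,n)\mid \overline{\mathrm{var}}(\mathrm{C}_P^{n-1}(V))\ge1\}.\]
   Context: Work over $\mathbb{R}$. $\mathrm{Gr}(n-1,n)$ is the set of hyperplanes (codimension-one linear subspaces) of $\mathbb{R}^n$, identified with their images in $\mathbb{P}^{n-1}$. A polytope $P\subseteq\mathbb{P}^{n-1}$ is the image in $\mathbb{P}^{n-1}$ of a cone $\{\sum c_iv_i:c_i\ge0\}$ over finitely many $v_i\in\mathbb{R}^n$; full-dimensional means the underlying polytope has dimension $n-1$. $P^{[n-1]}=\{V\in\mathrm{Gr}(n-1,n)\mid V\cap P\neq\emptyset\}$. Fix an ordering $w_1,\ldots,w_f$ of the vertices of $P$ and a representative vector in $\mathbb{R}^n$ for each. For $V=\ker(a)$ with $a=(a_1,\ldots,a_n)$ a nonzero row vector, the Chow form of the vertex $w_j$ is $C_{w_j}(V)=\sum_{i=1}^n (w_j)_i a_i$, and $\mathrm{C}_P^{n-1}(V)=(C_{w_1}(V),\ldots,C_{w_f}(V))$, defined up to a common nonzero scalar. For a real vector $x$, $\overline{\mathrm{var}}(x)$ is the maximal number of sign changes in the sequence obtained from $x$ by replacing each zero entry by $+$ or $-$ in any way. *)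

(* Defs.v *)
From HB Require Import structures.
From mathcomp Require Import all_boot all_order all_algebra.
From mathcomp Require Import reals.
Set Implicit Arguments. Unset Strict Implicit. Unset Printing Implicit Defensive.
Import Order.TTheory GRing.Theory Num.Theory.
Local Open Scope ring_scope.

Section Defs.
Variable R : realType.

Definition pairing (n : nat) (a x : 'rV[R]_n) : R := \sum_(i < n) x 0 i * a 0 i.

Definition in_cone (n m : nat) (v : 'I_m -> 'rV[R]_n) (x : 'rV[R]_n) : Prop :=
  exists c : 'I_m -> R, (forall i, 0 <= c i) /\ x = \sum_(i < m) c i *: v i.

(* The cone is pointed (contains no line): C ∩ -C = {0}.  This is what makes
   its image in P^{n-1} a polytope. *)
Definition pointed_cone (n m : nat) (v : 'I_m -> 'rV[R]_n) : Prop :=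
  forall x, in_cone v x -> in_cone v (- x) -> x = 0.

(* Full-dimensional: the cone spans R^n (polytope of dimension n-1). *)
Definition full_dim_cone (n m : nat) (v : 'I_m -> 'rV[R]_n) : Prop :=
  \rank (\matrix_(i < m) v i) = n.

(* x spans an extreme ray of the cone (= a vertex of P). *)
Definition extreme_ray (n m : nat) (v : 'I_m -> 'rV[R]_n) (x : 'rV[R]_n) : Prop :=
  [/\ x != 0, in_cone v x &
      forall y z, in_cone v y -> in_cone v z -> x = y + z ->
        exists t : R, 0 <= t /\ y = t *: x].

(* w_0, ..., w_(f-1) is an enumeration (without repetition) of the vertices of
   P, each given by a representative vector lying in the cone. *)
Definition vertex_list (n m f : nat) (v : 'I_m -> 'rV[R]_n) (w : 'I_f -> 'rV[R]_n)
  : Prop :=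
  [/\ forall j, extreme_ray v (w j),
      forall j k, (exists t : R, 0 < t /\ w j = t *: w k) -> j = k &
      forall x, extreme_ray v x -> exists j, exists t : R, 0 < t /\ x = t *: w j].

(* Chow form vector C_P^{n-1}(ker a) = (C_{w_1}(ker a), ..., C_{w_f}(ker a)). *)
Definition chow_vector (n f : nat) (w : 'I_f -> 'rV[R]_n) (a : 'rV[R]_n) : 'I_f -> R :=
  fun j => pairing a (w j).

(* Number of sign changes of a sequence of signs (true = +, false = -). *)
Definition sign_changes (s : seq bool) : nat :=
  count (fun p : bool * bool => p.1 != p.2) (zip s (behead s)).

Definition compatible_signs (f : nat) (x : 'I_f -> R) (s : {ffun 'I_f -> bool}) : bool :=
  [forall i, ((0 < x i) ==> s i) && ((x i < 0) ==> ~~ s i)].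

Definition var_bar (f : nat) (x : 'I_f -> R) : nat :=
  \max_(s : {ffun 'I_f -> bool} | compatible_signs x s)
     sign_changes [seq s i | i <- enum 'I_f].

End Defs.

(* Main.v *)
Require Import Defs.
From HB Require Import structures.
From mathcomp Require Import all_boot all_order all_algebra.
From mathcomp Require Import reals.
From Stdlib Require Import Classical.
Import Order.TTheory GRing.Theory Num.Theory.
Local Open Scope ring_scope.
Set Implicit Arguments. Unset Strict Implicit. Unset Printing Implicit Defensive.

Section Aux.
Variable R : realType.
Variable n : nat.

Lemma pairingD (a x y : 'rV[R]_n) : pairing a (x + y) = pairing a x + pairing a y.
Proof. by rewrite /pairing -big_split; apply: eq_bigr => i _; rewrite !mxE mulrDl. Qed.

Lemma pairingZ (a x : 'rV[R]_n) t : pairing a (t *: x) = t * pairing a x.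
Proof. by rewrite /pairing mulr_sumr; apply: eq_bigr => i _; rewrite !mxE mulrA. Qed.

Lemma pairing0 (a : 'rV[R]_n) : pairing a 0 = 0.
Proof. by rewrite /pairing big1 // => i _; rewrite mxE mul0r. Qed.

Lemma pairing_sum (I : finType) (P : pred I) (F : I -> 'rV[R]_n) a :
  pairing a (\sum_(i | P i) F i) = \sum_(i | P i) pairing a (F i).
Proof.
apply: (big_morph (pairing a)); [exact: pairingD | exact: pairing0].
Qed.

Variable m : nat.
Variable v : 'I_m -> 'rV[R]_n.

Lemma cone_ind (P : 'rV[R]_n -> Prop) :
  P 0 -> (forall x y, P x -> P y -> P (x + y)) ->
  (forall t x, 0 <= t -> P x -> P (t *: x)) -> (forall k, P (v k)) ->
  forall x, in_cone v x -> P x.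
Proof.
move=> P0 PD PZ Pv x [c [c0 ->]].
by apply: big_ind => // i _; apply: PZ.
Qed.

Lemma in_cone0 : in_cone v 0.
Proof. by exists (fun _ => 0); split => //; rewrite big1 // => i _; rewrite scale0r. Qed.

Lemma in_coneD x y : in_cone v x -> in_cone v y -> in_cone v (x + y).
Proof.
move=> [c [c0 ->]] [d [d0 ->]]; exists (fun i => c i + d i); split.
  by move=> i; rewrite addr_ge0.
by rewrite -big_split; apply: eq_bigr => i _; rewrite scalerDl.
Qed.

Lemma in_coneZ t x : 0 <= t -> in_cone v x -> in_cone v (t *: x).
Proof.
move=> t0 [c [c0 ->]]; exists (fun i => t * c i); split.
  by move=> i; rewrite mulr_ge0.
by rewrite scaler_sumr; apply: eq_bigr => i _; rewrite scalerA.
Qed.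

Lemma in_cone_v k : in_cone v (v k).
Proof.
exists (fun i => if i == k then 1 else 0); split.
  by move=> i; case: ifP.
rewrite (bigD1 k) //= eqxx scale1r big1 ?addr0 // => i /negPf ->.
by rewrite scale0r.
Qed.


Lemma in_cone_sum (P : pred 'I_m) (c : 'I_m -> R) :
  (forall k, 0 <= c k) -> in_cone v (\sum_(k | P k) c k *: v k).
Proof.
move=> c0; apply: big_ind; [exact: in_cone0 | exact: in_coneD |].
by move=> k _; apply: in_coneZ => //; apply: in_cone_v.
Qed.

Definition coneS (S : {set 'I_m}) (x : 'rV[R]_n) :=
  exists c : 'I_m -> R, (forall i, 0 <= c i) /\ x = \sum_(i in S) c i *: v i.

Lemma coneS_sub S x : coneS S x -> in_cone v x.
Proof. by move=> [c [c0 ->]]; apply: in_cone_sum. Qed.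

Lemma coneS0 S : coneS S 0.
Proof. by exists (fun _ => 0); split => //; rewrite big1 // => i _; rewrite scale0r. Qed.

Lemma coneSD S x y : coneS S x -> coneS S y -> coneS S (x + y).
Proof.
move=> [c [c0 ->]] [d [d0 ->]]; exists (fun i => c i + d i); split.
  by move=> i; rewrite addr_ge0.
by rewrite -big_split; apply: eq_bigr => i _; rewrite scalerDl.
Qed.

Lemma coneSZ S t x : 0 <= t -> coneS S x -> coneS S (t *: x).
Proof.
move=> t0 [c [c0 ->]]; exists (fun i => t * c i); split.
  by move=> i; rewrite mulr_ge0.
by rewrite scaler_sumr; apply: eq_bigr => i _; rewrite scalerA.
Qed.

Lemma coneS_v (S : {set 'I_m}) k : k \in S -> coneS S (v k).
Proof.
move=> kS; exists (fun i => if i == k then 1 else 0); split.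
  by move=> i; case: ifP.
rewrite (bigD1 k) //= eqxx scale1r big1 ?addr0 // => i /andP [_ /negPf ->].
by rewrite scale0r.
Qed.

Lemma coneS_trans S x : (forall k, coneS S (v k)) -> in_cone v x -> coneS S x.
Proof.
move=> H; apply: cone_ind => //; [exact: coneS0 | exact: coneSD | exact: coneSZ].
Qed.

Lemma pointed_sum0 u z : pointed_cone v -> in_cone v u -> in_cone v z ->
  u + z = 0 -> u = 0.
Proof.
move=> Hp Hu Hz Huz; apply: Hp => //.
by have -> : - u = z by apply/eqP; rewrite eq_sym -subr_eq0 opprK addrC Huz.
Qed.

Lemma key (S : {set 'I_m}) i : pointed_cone v -> (forall k, coneS S (v k)) -> i \in S ->
  v i != 0 -> ~ extreme_ray v (v i) -> coneS (S :\ i) (v i).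
Proof.
move=> Hp HS iS vi0 Hne.
have [y [z [Hy Hz Hyz Hnt]]] : exists y z, [/\ in_cone v y, in_cone v z,
    v i = y + z & ~ exists t : R, 0 <= t /\ y = t *: v i].
  apply: NNPP => H; apply: Hne; split => //; first exact: in_cone_v.
  move=> y z Hy Hz Hyz; apply: NNPP => Ht; apply: H; exists y, z; by split.
have [c [c0 yE]] := coneS_trans HS Hy.
have [d [d0 zE]] := coneS_trans HS Hz.
pose e k := c k + d k.
have e0 k : 0 <= e k by rewrite addr_ge0.
pose r := \sum_(k | (k \in S) && (k != i)) e k *: v k.
have rS : coneS (S :\ i) r.
  exists e; split => //; rewrite /r; apply: eq_bigl => k.
  by rewrite in_setD1 andbC.
have viE : v i = e i *: v i + r.
  rewrite {1}Hyz yE zE -big_split /=.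
  rewrite (eq_bigr (fun k => e k *: v k)); last by move=> k _; rewrite scalerDl.
  by rewrite (bigD1 i).
have [ei1 | ei1] := ltrP (e i) 1.
  have -> : v i = (1 - e i)^-1 *: r.
    apply: (@scalerI _ _ (1 - e i)); first by rewrite subr_eq0 eq_sym lt_eqF.
    rewrite scalerA divff ?scale1r; last by rewrite subr_eq0 eq_sym lt_eqF.
    by rewrite scalerBl scale1r {1}viE addrC addKr.
  by apply: coneSZ => //; rewrite invr_ge0 subr_ge0 ltW.
exfalso; apply: Hnt.
have r0 : r = 0.
  apply: (@pointed_sum0 r ((e i - 1) *: v i)) => //.
  - exact: coneS_sub rS.
  - by apply: in_coneZ; [rewrite subr_ge0 | exact: in_cone_v].
  - by rewrite scalerBl scale1r addrA (addrC r) -viE subrr.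
have rc0 : \sum_(k | (k \in S) && (k != i)) c k *: v k = 0.
  apply: (@pointed_sum0 _ (\sum_(k | (k \in S) && (k != i)) d k *: v k)) => //.
  - exact: in_cone_sum.
  - exact: in_cone_sum.
  - rewrite -big_split /=; apply: etrans r0; apply: eq_bigr => k _; by rewrite /e scalerDl.
exists (c i); split => //.
by rewrite yE (bigD1 i) //= rc0 addr0.
Qed.

Lemma coneS_shrink (S : {set 'I_m}) i : (forall k, coneS S (v k)) -> coneS (S :\ i) (v i) ->
  forall k, coneS (S :\ i) (v k).
Proof.
move=> HS Hi k; have [c [c0 ->]] := HS k.
apply: big_ind; [exact: coneS0 | exact: coneSD |].
move=> j jS; apply: coneSZ => //; have [->|ji] := eqVneq j i; first exact: Hi.
by apply: coneS_v; rewrite in_setD1 ji.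
Qed.

Lemma extreme_gen (Q : 'rV[R]_n -> Prop) : pointed_cone v ->
  Q 0 -> (forall x y, Q x -> Q y -> Q (x + y)) ->
  (forall t x, 0 <= t -> Q x -> Q (t *: x)) ->
  (forall x, extreme_ray v x -> Q x) ->
  forall x, in_cone v x -> Q x.
Proof.
move=> Hp Q0 QD QZ Qe.
suff H : forall k (S : {set 'I_m}), (#|S| <= k)%N -> (forall j, coneS S (v j)) ->
  forall x, in_cone v x -> Q x.
  apply: (H #|[set: 'I_m]| setT) => // j.
  exact: coneS_v (in_setT j).
elim=> [|k IH] S Hk HS.
  have S0 : S = set0 by apply/eqP; rewrite -cards_eq0 -leqn0.
  apply: cone_ind => // j; have [c [c0 ->]] := HS j.
  by rewrite S0 big_set0.
have [Hall | [i [iS [vi0 Hne]]]] : (forall i, i \in S -> v i = 0 \/ extreme_ray v (v i))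
    \/ exists i, [/\ i \in S, v i != 0 & ~ extreme_ray v (v i)].
  apply: NNPP => H; apply H; left => i iS; apply: NNPP => H2; apply H; right.
  exists i; split => //; first by apply/eqP => vi0; apply: H2; left.
  by move=> He; apply: H2; right.
  apply: cone_ind => // j; have [c [c0 ->]] := HS j.
  apply: big_ind => // l lS; apply: QZ => //.
  by case: (Hall l lS) => [->|]; [| exact: Qe].
apply: (IH (S :\ i)).
  by rewrite (cardsD1 i S) iS add1n ltnS in Hk.
exact: coneS_shrink HS (key Hp HS iS vi0 Hne).
Qed.

End Aux.

Lemma sc_cons (a b : bool) t :
  sign_changes [:: a, b & t] = ((a != b) + sign_changes (b :: t))%N.
Proof. by []. Qed.

Lemma sc_pos (l : seq bool) : false \in l -> true \in l -> (0 < sign_changes l)%N.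
Proof.
elim: l => [//|a [|b t] IH].
  by rewrite !inE; case: a.
rewrite sc_cons; case: (eqVneq a b) => [->|//] /= Hf Ht.
by apply: IH; move: Hf Ht; rewrite !inE; case: b => //=; rewrite ?orbb.
Qed.

Lemma sc_mem (l : seq bool) : (0 < sign_changes l)%N -> false \in l /\ true \in l.
Proof.
elim: l => [//|a [|b t] IH] //.
rewrite sc_cons; case: (eqVneq a b) => [->|ab] /=.
  move=> /IH; rewrite !inE => -[Hf Ht].
  by split; apply/orP; right.
by move=> _; rewrite !inE; move: ab; clear IH; case: a; case: b.
Qed.

Lemma varpos (R : realType) f (p : 'I_f -> R) j k : j != k -> p j <= 0 -> 0 <= p k ->
  (1 <= var_bar p)%N.
Proof.
move=> jk pj pk.
pose s := [ffun i => if i == j then false else if i == k then true else (0 < p i)].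
have Hc : compatible_signs p s.
  apply/forallP => i; rewrite /s ffunE.
  case: (eqVneq i j) => [->|ij]; first by rewrite (leNgt _ 0) in pj; rewrite (negPf pj) implybT.
  case: (eqVneq i k) => [->|ik] /=; first by rewrite implybT /= ltNge pk.
  by case: (ltrgtP (p i) 0).
apply: leq_trans (leq_bigmax_cond _ Hc).
apply: sc_pos; apply/mapP.
  by exists j; rewrite ?mem_enum // /s ffunE eqxx.
by exists k; rewrite ?mem_enum // /s ffunE eq_sym (negPf jk) eqxx.
Qed.

Lemma fulldim_zero (R : realType) n m (v : 'I_m -> 'rV[R]_n) (a : 'rV[R]_n) :
  full_dim_cone v -> (forall i, pairing a (v i) = 0) -> a = 0.
Proof.
move=> Hfd Hv.
have /row_fullP [B HB] : row_full (\matrix_(i < m) v i) by rewrite /row_full Hfd.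
have HA : (\matrix_(i < m) v i) *m a^T = 0.
  apply/matrixP => i j; rewrite !mxE; apply: etrans (Hv i); rewrite /pairing.
  apply: eq_bigr => k _.
  by rewrite !mxE (ord1 j).
apply: trmx_inj; rewrite trmx0 -[a^T]mul1mx -HB -mulmxA HA mulmx0.
by apply/matrixP => i j; rewrite !mxE.
Qed.

Lemma pos_sum0 (R : realType) f (c q : 'I_f -> R) : (forall j, 0 <= c j) ->
  (forall j, 0 < q j) -> \sum_j c j * q j = 0 -> forall j, c j = 0.
Proof.
move=> c0 q0 H j.
have /psumr_eq0P H2 : (forall j, true -> 0 <= c j * q j).
  by move=> i _; rewrite mulr_ge0 // ltW.
have := H2 H j isT; move/eqP; rewrite mulf_eq0 (gt_eqF (q0 j)) orbF.
by move/eqP.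
Qed.

Theorem corollary5p3 (R : realType) (n m f : nat)
    (v : 'I_m -> 'rV[R]_n) (w : 'I_f -> 'rV[R]_n) :
  pointed_cone v -> full_dim_cone v -> vertex_list v w ->
  forall a : 'rV[R]_n, a != 0 ->
    (exists x : 'rV[R]_n, [/\ in_cone v x, x != 0 & pairing a x = 0])
    <-> (1 <= var_bar (chow_vector w a))%N.
Proof.
move=> Hp Hfd [Hw1 Hw2 Hw3] a a0.
set p := chow_vector w a.
have Hcw : forall x, in_cone v x -> in_cone w x.
  apply: extreme_gen => //; [exact: in_cone0 | exact: in_coneD | exact: in_coneZ |].
  move=> x /Hw3 [j [t [t0 ->]]]; apply: in_coneZ; [exact: ltW | exact: in_cone_v].
have Hwv : forall j, in_cone v (w j) by move=> j; case: (Hw1 j).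
have Hw0 : forall j, w j != 0 by move=> j; case: (Hw1 j).
have pairw : forall c : 'I_f -> R,
    pairing a (\sum_j c j *: w j) = \sum_j c j * p j.
  move=> c; rewrite pairing_sum; apply: eq_bigr => j _; by rewrite pairingZ.
split.
  move=> [x [Hx x0 ax]].
  have [c [c0 xE]] := Hcw x Hx.
  have Hs : \sum_j c j * p j = 0 by rewrite -pairw -xE.
  have cnz : ~ (forall j, c j = 0).
    move=> Hc; move/eqP: x0; apply; rewrite xE big1 // => j _.
    by rewrite Hc scale0r.
  have [j pj] : exists j, p j <= 0.
    apply: NNPP => H; apply: cnz; apply: (pos_sum0 c0 _ Hs) => j.
    by rewrite ltNge; apply/negP => Hj; apply: H; exists j.
  have [k pk] : exists k, 0 <= p k.
    apply: NNPP => H; apply: cnz; apply: (@pos_sum0 _ _ c (fun j => - p j) c0).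
      by move=> i; rewrite oppr_gt0 ltNge; apply/negP => Hj; apply: H; exists i.
    rewrite (eq_bigr (fun i => - (c i * p i))); last by move=> i _; rewrite mulrN.
    by rewrite sumrN Hs oppr0.
  have [kj|jk] := eqVneq j k; last by exact: varpos jk pj pk.
  subst k.
  have pj0 : p j = 0 by apply/eqP; rewrite eq_le pj pk.
  have [[l lj] | Hall] : (exists l, l != j) \/ (forall l, l = j).
    apply: NNPP => H; apply H; right => l; apply: NNPP => Hl; apply H; left.
    by exists l; apply/eqP.
    case/orP: (le_total (p l) 0) => Hl.
      exact: varpos lj Hl pk.
    have jl : j != l by rewrite eq_sym.
    exact: varpos jl pj Hl.
  exfalso; move/eqP: a0; apply; apply: (fulldim_zero Hfd) => i.
  have [d [d0 ->]] := Hcw _ (in_cone_v v i).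
  rewrite pairw big1 // => l _; by rewrite (Hall l) pj0 mulr0.
move=> Hv.
have [s [Hc Hsc]] : exists s, compatible_signs p s /\
    (0 < sign_changes [seq s i | i <- enum 'I_f])%N.
  apply: NNPP => H.
  suff : (var_bar p <= 0)%N by rewrite leqn0 => /eqP H0; rewrite H0 in Hv.
  apply/bigmax_leqP => s Hs; rewrite leqNgt; apply/negP => Hlt.
  by apply: H; exists s.
have [/mapP [j _ sj] /mapP [k _ sk]] := sc_mem Hsc.
have /andP [Hj1 Hj2] := forallP Hc j.
have /andP [Hk1 Hk2] := forallP Hc k.
have pj : p j <= 0.
  by rewrite leNgt; apply/negP => H; move: Hj1; rewrite H -sj.
have pk : 0 <= p k.
  by rewrite leNgt; apply/negP => H; move: Hk2; rewrite H -sk.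
have [pj0|pj0] := eqVneq (p j) 0.
  by exists (w j); split; [exact: Hwv | exact: Hw0 | exact: pj0].
have [pk0|pk0] := eqVneq (p k) 0.
  by exists (w k); split; [exact: Hwv | exact: Hw0 | exact: pk0].
have pjn : p j < 0 by rewrite lt_neqAle pj0 pj.
have pkp : 0 < p k by rewrite lt_neqAle eq_sym pk0 pk.
exists (p k *: w j + (- p j) *: w k); split.
- apply: in_coneD; apply: in_coneZ; rewrite ?ltW ?oppr_gt0 //; exact: Hwv.
- apply/eqP => H0.
  have : p k *: w j = 0.
    apply: (pointed_sum0 Hp _ _ H0); apply: in_coneZ; rewrite ?ltW ?oppr_gt0 //;
      exact: Hwv.
  by move/eqP; rewrite scaler_eq0 (negPf pk0) /= (negPf (Hw0 j)).
- by rewrite pairingD !pairingZ -/(p j) -/(p k) mulNr mulrC subrr.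
Qed.
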